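(* Let $R$ be a commutative Bezout domain. The following are equivalent: (1) $R$ has stable range 1.5; (2) $GL_2(R)=\mathbf G_\Phi\, U_2^{lw}(R)\,U_2^{up}(R)$ for every nonsingular $2\times2$ $d$-matrix $\Phi$; (3) $GL_n(R)=\mathbf G_\Phi\, U_n^{lw}(R)\,U_n^{up}(R)$ for every $n\ge2$ and every nonsingular $n\times n$ $d$-matrix $\Phi$.
   Context: A commutative Bezout domain is a commutative integral domain with $1\ne0$ in which every finitely generated ideal is principal. It has stable range 1.5 if for all $a,b\in R$ and $c\in R\setminus\{0\}$ with $(a,b,c)=1$ there is $r\in R$ with $(a+br,c)=1$. A $d$-matrix is a diagonal matrix $\mathrm{diag}(\varphi_1,\dots,\varphi_n)$ with $\varphi_i\mid\varphi_{i+1}$. $\mathbf G_\Phi=\{H\in GL_n(R):\ \exists K\in GL_n(R),\ H\Phi=\Phi K\}$. $U_n^{lw}(R)$ and $U_n^{up}(R)$ denote the groups of lower and upper unitriangular $n\times n$ matrices (triangular with $1$'s on the diagonal). For sets of matrices, $XYZ=\{xyz: x\in X,y\in Y,z\in Z\}$. *)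

(* Defs.v *)
From HB Require Import structures.
From mathcomp Require Import all_boot all_order all_algebra.
Set Implicit Arguments. Unset Strict Implicit. Unset Printing Implicit Defensive.
Import GRing.Theory.
Local Open Scope ring_scope.

Section Defs.
Variable R : idomainType.

Definition dvdR (a b : R) : Prop := exists c : R, b = c * a.

Definition in_ideal (s : seq R) (x : R) : Prop :=
  exists c : seq R, size c = size s /\ x = \sum_(i < size s) c`_i * s`_i.

Definition bezout_domain : Prop :=
  forall s : seq R, exists d : R, forall x, in_ideal s x <-> in_ideal [:: d] x.

Definition stable_range_1_5 : Prop :=
  forall a b c : R, c != 0 -> in_ideal [:: a; b; c] 1 ->
    exists r : R, in_ideal [:: a + b * r; c] 1.

Definition is_dmatrix (n : nat) (Phi : 'M[R]_n) : Prop :=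
  exists phi : 'rV[R]_n,
    Phi = diag_mx phi /\
    forall (i j : 'I_n), j = i.+1 :> nat -> dvdR (phi 0 i) (phi 0 j).

Definition G_Phi (n : nat) (Phi : 'M[R]_n) (H : 'M[R]_n) : Prop :=
  H \in unitmx /\ exists K : 'M[R]_n, K \in unitmx /\ H *m Phi = Phi *m K.

Definition lower_unitri (n : nat) (L : 'M[R]_n) : Prop :=
  forall i j : 'I_n, (if (i < j)%N then L i j = 0 else True) /\ (i = j -> L i j = 1).

Definition upper_unitri (n : nat) (U : 'M[R]_n) : Prop :=
  forall i j : 'I_n, (if (j < i)%N then U i j = 0 else True) /\ (i = j -> U i j = 1).

Definition GL_factor (n : nat) (Phi : 'M[R]_n) : Prop :=
  forall A : 'M[R]_n, A \in unitmx <->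
    exists H L U : 'M[R]_n,
      [/\ G_Phi Phi H, lower_unitri L, upper_unitri U & A = H *m L *m U].

End Defs.

(* Main.v *)
Require Import Defs.
From HB Require Import structures.
From mathcomp Require Import all_boot all_order all_algebra.
From mathcomp Require Import ring.
Set Implicit Arguments. Unset Strict Implicit. Unset Printing Implicit Defensive.
Import GRing.Theory.
Local Open Scope ring_scope.


Section Ideals.
Variable R : idomainType.

Lemma in_ideal1 (d x : R) : in_ideal [:: d] x <-> exists c, x = c * d.
Proof.
split.
- by case=> c [_ ->]; rewrite big_ord1; exists c`_0.
- by case=> c ->; exists [:: c]; rewrite big_ord1.
Qed.

Lemma in_ideal2 (x y z : R) : in_ideal [:: x; y] z <-> exists u v, z = u * x + v * y.
Proof.
split.
- by case=> c [_ ->]; rewrite !big_ord_recl big_ord0 addr0; exists c`_0, c`_1.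
- by case=> u [v ->]; exists [:: u; v]; rewrite !big_ord_recl big_ord0 addr0.
Qed.

Lemma in_ideal3 (x y w z : R) :
  in_ideal [:: x; y; w] z <-> exists u v t, z = u * x + v * y + t * w.
Proof.
split.
- case=> c [_ ->]; rewrite !big_ord_recl big_ord0 addr0; exists c`_0, c`_1, c`_2.
  by rewrite /= addrA.
- case=> u [v [t ->]]; exists [:: u; v; t]; rewrite !big_ord_recl big_ord0 addr0.
  by rewrite /= addrA.
Qed.

Definition cop (x y : R) := exists u v, u * x + v * y = 1.

Lemma cop_mul (x y c : R) : cop x c -> cop y c -> cop (x * y) c.
Proof.
case=> u1 [v1 e1] [u2 [v2 e2]]; exists (u1 * u2), (u1 * x * v2 + v1 * (u2 * y + v2 * c)).
have E : (u1 * x + v1 * c) * (u2 * y + v2 * c) = 1 by rewrite e1 e2 mulr1.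
by rewrite -E; ring.
Qed.

Hypothesis hB : bezout_domain R.

Lemma gcd2 (x y : R) : exists g p q mu nu,
  [/\ x = p * g, y = q * g & g = mu * x + nu * y].
Proof.
have [g Hg] := hB [:: x; y].
have /Hg/in_ideal1 [p Hp] : in_ideal [:: x; y] x by apply/in_ideal2; exists 1, 0; ring.
have /Hg/in_ideal1 [q Hq] : in_ideal [:: x; y] y by apply/in_ideal2; exists 0, 1; ring.
have /Hg/in_ideal2 [mu [nu Hm]] : in_ideal [:: g] g by apply/in_ideal1; exists 1; ring.
by exists g, p, q, mu, nu.
Qed.

Lemma gcd_fam n (f : 'I_n -> R) : exists e (s : 'I_n -> R),
  e = \sum_i s i * f i /\ forall i, dvdR e (f i).
Proof.
elim: n f => [|n IH] f.
  by exists 0, (fun _ => 0); split; [rewrite big_ord0 | case].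
have [e [s [He Hd]]] := IH (fun i => f (lift ord_max i)).
have [g [p [q [mu [nu [E1 E2 E3]]]]]] := gcd2 (f ord_max) e.
exists g, (fun i => if unlift ord_max i is Some j then nu * s j else mu).
split.
  have Hw : forall i : 'I_n, widen_ord (leqnSn n) i = lift ord_max i.
    by move=> i; apply: val_inj; rewrite /= /bump leqNgt ltn_ord.
  rewrite big_ord_recr /= unlift_none E3 He mulr_sumr addrC; congr (_ + _).
  by apply: eq_bigr => i _; rewrite Hw liftK mulrA.
move=> i; case: (unliftP ord_max i) => [j ->|->].
  by have [c Hc] := Hd j; exists (c * q); rewrite Hc E2 mulrA.
by exists p.
Qed.

End Ideals.


Section GPhi.
Variable R : idomainType.

Lemma detdiag_neq0 n (phi : 'rV[R]_n) : (forall i, phi 0 i != 0) -> \det (diag_mx phi) != 0.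
Proof. by move=> h; rewrite det_diag; apply/prodf_neq0 => i _. Qed.

Lemma GPhi_crit n (phi : 'rV[R]_n) (H : 'M[R]_n) : (forall i, phi 0 i != 0) ->
  H \in unitmx -> (forall i j, dvdR (phi 0 i) (H i j * phi 0 j)) -> G_Phi (diag_mx phi) H.
Proof.
move=> hnz hu hd; split => //.
have ex : forall i j, exists c, H i j * phi 0 j == c * phi 0 i.
  by move=> i j; have [c hc] := hd i j; exists c; rewrite hc.
pose K := \matrix_(i, j) xchoose (ex i j).
have eK : H *m diag_mx phi = diag_mx phi *m K.
  apply/matrixP => i j; rewrite mul_mx_diag mul_diag_mx !mxE.
  by move: (xchooseP (ex i j)); move: (xchoose (ex i j)) => c /eqP ->; rewrite mulrC.
exists K; split => //.
move: hu; rewrite !unitmxE.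
have : \det (H *m diag_mx phi) = \det (diag_mx phi *m K) by rewrite eK.
rewrite !det_mulmx mulrC => /mulfI -> //; exact: detdiag_neq0.
Qed.

Lemma GPhi_div n (phi : 'rV[R]_n) (H : 'M[R]_n) :
  G_Phi (diag_mx phi) H -> forall i j, dvdR (phi 0 i) (H i j * phi 0 j).
Proof.
case=> _ [K [_ eK]] i j; exists (K i j).
have := congr1 (fun M : 'M[R]_n => M i j) eK; rewrite mul_mx_diag mul_diag_mx !mxE => ->.
by rewrite mulrC.
Qed.

Lemma GPhi_unit n (Phi H : 'M[R]_n) : G_Phi Phi H -> H \in unitmx.
Proof. by case. Qed.

Lemma GPhi_mul n (Phi H1 H2 : 'M[R]_n) : G_Phi Phi H1 -> G_Phi Phi H2 -> G_Phi Phi (H1 *m H2).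
Proof.
case=> u1 [K1 [k1 e1]] [u2 [K2 [k2 e2]]]; split; first by rewrite unitmx_mul u1 u2.
exists (K1 *m K2); split; first by rewrite unitmx_mul k1 k2.
by rewrite -mulmxA e2 mulmxA e1 mulmxA.
Qed.

Lemma GPhi_inv n (Phi H : 'M[R]_n) : G_Phi Phi H -> G_Phi Phi (invmx H).
Proof.
case=> u [K [k e]]; split; first by rewrite unitmx_inv.
exists (invmx K); split; first by rewrite unitmx_inv.
apply: (canRL (mulmxK k)).
by rewrite -mulmxA -e mulmxA mulVmx // mul1mx.
Qed.

Lemma lower_unit n (L : 'M[R]_n) : lower_unitri L -> L \in unitmx.
Proof.
move=> hL; rewrite unitmxE det_trig.
  by rewrite big1 ?unitr1 // => i _; case: (hL i i) => _ ->.
apply/is_trig_mxP => i j lt; by case: (hL i j); rewrite lt.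
Qed.

Lemma upper_unit n (U : 'M[R]_n) : upper_unitri U -> U \in unitmx.
Proof.
move=> hU; rewrite unitmxE -det_tr det_trig.
  by rewrite big1 ?unitr1 // => i _; rewrite mxE; case: (hU i i) => _ ->.
apply/is_trig_mxP => i j lt; rewrite mxE; by case: (hU j i); rewrite lt.
Qed.

End GPhi.


Section Emb.
Variable R : idomainType.
Variable N : nat.
Variables p q : 'I_N.
Hypothesis pq : p != q.

Definition emb (x00 x01 x10 x11 : R) : 'M[R]_N :=
  x00 *: delta_mx p p + x01 *: delta_mx p q + x10 *: delta_mx q p + x11 *: delta_mx q q.

Lemma embM x00 x01 x10 x11 y00 y01 y10 y11 :
  emb x00 x01 x10 x11 *m emb y00 y01 y10 y11 =
  emb (x00 * y00 + x01 * y10) (x00 * y01 + x01 * y11)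
      (x10 * y00 + x11 * y10) (x10 * y01 + x11 * y11).
Proof.
have qp : q != p by rewrite eq_sym.
rewrite /emb !mulmxDl !mulmxDr -!scalemxAl -!scalemxAr !mul_delta_mx_cond !eqxx.
rewrite (negbTE pq) (negbTE qp) !mulr0n !mulr1n !scaler0 !scalerA.
apply/matrixP => i j; rewrite !mxE; ring.
Qed.

Lemma emb_entry x00 x01 x10 x11 i j :
  emb x00 x01 x10 x11 i j =
  x00 * ((i == p) && (j == p))%:R + x01 * ((i == p) && (j == q))%:R +
  x10 * ((i == q) && (j == p))%:R + x11 * ((i == q) && (j == q))%:R.
Proof. by rewrite !mxE. Qed.

Lemma T_inv (g1 g2 c h : R) : g1 * h - g2 * c = 1 ->
  (1%:M + emb (g1 - 1) g2 c (h - 1)) *m (1%:M + emb (h - 1) (- g2) (- c) (g1 - 1)) = 1%:M.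
Proof.
move=> hd.
rewrite mulmxDl mul1mx mulmxDr mulmx1 embM.
rewrite -addrA.
set E := (X in 1%:M + X).
have -> : E = (g1 * h - g2 * c - 1) *: (delta_mx p p + delta_mx q q).
  by apply/matrixP => i j; rewrite /E !mxE; ring.
by rewrite hd subrr scale0r addr0.
Qed.

Lemma deltaM_entry m (B : 'M[R]_(N, m)) (i j r : 'I_N) (c : 'I_m) :
  (delta_mx i j *m B) r c = ((r == i)%:R * B j c).
Proof.
rewrite mxE (bigD1 j) //= big1 ?addr0; first by rewrite mxE eqxx andbT.
by move=> k kj; rewrite mxE (negbTE kj) andbF mul0r.
Qed.

Lemma addE m k (A B : 'M[R]_(m, k)) i j : (A + B) i j = A i j + B i j.
Proof. by rewrite mxE. Qed.
Lemma scaleE m k (x : R) (A : 'M[R]_(m, k)) i j : (x *: A) i j = x * A i j.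
Proof. by rewrite mxE. Qed.

Lemma TM_entry (x00 x01 x10 x11 : R) (b : 'cV[R]_N) :
  ((1%:M + emb x00 x01 x10 x11) *m b) p 0 = (1 + x00) * b p 0 + x01 * b q 0.
Proof.
rewrite mulmxDl mul1mx /emb !mulmxDl -!scalemxAl !addE !scaleE !deltaM_entry.
rewrite eqxx (negbTE pq) !mul1r !mul0r !mulr0 !addr0; ring.
Qed.

End Emb.


Section Key.
Variable R : idomainType.
Hypothesis hB : bezout_domain R.
Hypothesis hS : stable_range_1_5 R.

Lemma dvdR_add (e x y : R) : dvdR e x -> dvdR e y -> dvdR e (x + y).
Proof. by case=> c -> [d ->]; exists (c + d); (rewrite ?natbE /=; ring). Qed.

Lemma dvdR_sum n (F : 'I_n -> R) e : (forall i, dvdR e (F i)) -> dvdR e (\sum_i F i).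
Proof.
move=> h; elim/big_ind: _ => //; first by exists 0; (rewrite ?natbE /=; ring).
exact: dvdR_add.
Qed.

Lemma sum3 N (z l : 'I_N) (zl : z != l) (F : 'I_N -> R) :
  \sum_i F i = F z + F l + \sum_(i | (i != z) && (i != l)) F i.
Proof.
rewrite (bigD1 z) //= (bigD1 l) /=; last by rewrite eq_sym.
by rewrite addrA; congr (_ + _); apply: eq_bigl => i; rewrite andbC.
Qed.

Lemma natbE (b : bool) : b%:R = (if b then 1 else 0) :> R.
Proof. by case: b. Qed.

Lemma core m (phi : 'rV[R]_m.+2) (a : 'cV[R]_m.+2) (rho : 'rV[R]_m.+2) :
  (forall i j : 'I_m.+2, (i <= j)%N -> dvdR (phi 0 i) (phi 0 j)) ->
  (forall i, phi 0 i != 0) ->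
  (rho *m a) 0 0 = 1 -> a ord_max 0 != 0 ->
  exists G, G_Phi (diag_mx phi) G /\ (G *m a) ord0 0 = 1.
Proof.
move=> hdiv hnz hrho hal.
set l : 'I_m.+2 := ord_max.
have zl : (ord0 : 'I_m.+2) != l by rewrite -(inj_eq val_inj).
have lz : l != ord0 by rewrite eq_sym.
pose mid (i : 'I_m.+2) := (i != ord0) && (i != l).
pose f i := if mid i then a i 0 else 0.
have [e [s [He Hd]]] := gcd_fam hB f.
have [t Ht] : dvdR e (\sum_i rho 0 i * f i).
  apply: dvdR_sum => i; have [c ->] := Hd i; exists (rho 0 i * c); (rewrite ?natbE /=; ring).
have h1 : 1 = rho 0 ord0 * a ord0 0 + t * e + rho 0 l * a l 0.
  rewrite -hrho mxE (sum3 zl) -Ht /f big_mkcond /=.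
  rewrite [X in _ + _ + X = _](eq_bigr (fun i => rho 0 i * (if mid i then a i 0 else 0))).
    by rewrite ?natbE /=; ring.
  by move=> i _; rewrite /mid; case: ifP => _; (rewrite ?natbE /=; ring).
have hid : in_ideal [:: a ord0 0; e; a l 0] 1.
  by apply/in_ideal3; exists (rho 0 ord0), t, (rho 0 l).
have [k /in_ideal2 [x [y Hxy]]] := hS hal hid.
set a0 := a ord0 0 + e * k in Hxy.
have [psi Hpsi] := hdiv ord0 l (leq0n _).
have psinz : psi != 0.
  by apply/eqP => p0; move: (hnz l); rewrite Hpsi p0 mul0r eqxx.
have hid2 : in_ideal [:: x; a l 0; psi] 1.
  by apply/in_ideal3; exists a0, y, 0; rewrite Hxy; (rewrite ?natbE /=; ring).
have [k2 /in_ideal2 [u1 [v1 Huv]]] := hS psinz hid2.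
set g1 := x + a l 0 * k2 in Huv.
pose g2 := y - a0 * k2.
pose h := u1 * a0 * g1 + u1 * a l 0 * g2 + v1 * psi * a0.
pose mm := - v1 * a l 0.
have e1 : g1 * a0 + g2 * a l 0 = 1 by rewrite [RHS]Hxy /g1 /g2; (rewrite ?natbE /=; ring).
have hdet : g1 * h - g2 * (psi * mm) = 1.
  have -> : g1 * h - g2 * (psi * mm) = (u1 * g1 + v1 * psi) * (g1 * a0 + g2 * a l 0).
    by rewrite /h /mm; (rewrite ?natbE /=; ring).
  by rewrite e1 mulr1 -Huv.
pose M := \matrix_(i, j) (((i == ord0) && mid j)%:R * (k * s j)) : 'M[R]_m.+2.
pose E := 1%:M + M.
have Eup : upper_unitri E.
  move=> i j; rewrite /E /M !mxE; split.
    case: ifP => // ji; have ij : (i == j) = false.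
      by apply/negbTE; rewrite -(inj_eq val_inj) /= neq_ltn ji orbT.
    have i0 : (i == ord0) = false.
      by apply/negbTE; rewrite -(inj_eq val_inj) /= -lt0n (leq_ltn_trans (leq0n _) ji).
    by rewrite ij i0 /= mul0r addr0.
  move=> ->; rewrite eqxx /mid.
  by case: eqP => [->|]; rewrite ?eqxx /= mul0r addr0.
have EG : G_Phi (diag_mx phi) E.
  apply: GPhi_crit => //; first exact: upper_unit.
  move=> i j; rewrite /E /M !mxE.
  case: (eqVneq i ord0) => [->|i0].
    by have [c ->] := hdiv ord0 j (leq0n _); eexists; rewrite mulrA.
  rewrite /= mul0r addr0.
  case: (eqVneq i j) => [->|ij]; first by exists 1; (rewrite ?natbE /=; ring).
  by exists 0; rewrite ?(negbTE ij) ?natbE; (rewrite /=; ring).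
have b0 : (E *m a) ord0 0 = a0.
  rewrite mulmxDl mul1mx mxE [X in _ + X]mxE /a0 He mulr_suml.
  congr (_ + _); apply: eq_bigr => j _.
  rewrite !mxE eqxx /= /f /mid; case: ifP => _; (rewrite ?natbE /=; ring).
have bl : (E *m a) l 0 = a l 0.
  rewrite mulmxDl mul1mx mxE [X in _ + X]mxE big1 ?addr0 // => j _.
  by rewrite !mxE (negbTE lz) /=; (rewrite ?natbE /=; ring).
pose T := 1%:M + emb ord0 l (g1 - 1) g2 (psi * mm) (h - 1).
have Tu : T \in unitmx by have [] := mulmx1_unit (T_inv zl hdet).
have TG : G_Phi (diag_mx phi) T.
  apply: GPhi_crit => // i j; rewrite /T addE emb_entry mxE.
  case: (eqVneq i ord0) => [->|i0].
    by have [c ->] := hdiv ord0 j (leq0n _); eexists; rewrite mulrA.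
  rewrite ?(negbTE i0) /= ?natbE /= ?mul0r ?mulr0 ?add0r ?addr0.
  case: (eqVneq i l) => [->|il].
    case: (eqVneq j ord0) => [->|j0].
      by exists mm; rewrite ?eqxx ?(negbTE lz) /= Hpsi; ring.
    case: (eqVneq j l) => [->|jl].
      by exists h; rewrite ?eqxx /=; ring.
    by exists 0; rewrite ?(negbTE j0) ?(negbTE jl) ?andbF ?eqxx /=; ring.
  rewrite ?(negbTE il) /=.
  case: (eqVneq i j) => [->|ij]; first by exists 1; rewrite ?eqxx; ring.
  by exists 0; rewrite ?(negbTE ij); ring.
exists (T *m E); split; first exact: GPhi_mul.
rewrite -mulmxA TM_entry // b0 bl -e1; (rewrite ?natbE /=; ring).
Qed.

Lemma key m (phi : 'rV[R]_m.+1) (a : 'cV[R]_m.+1) (rho : 'rV[R]_m.+1) :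
  (forall i j : 'I_m.+1, (i <= j)%N -> dvdR (phi 0 i) (phi 0 j)) ->
  (forall i, phi 0 i != 0) ->
  (rho *m a) 0 0 = 1 ->
  exists G, G_Phi (diag_mx phi) G /\ (G *m a) ord0 0 = 1.
Proof.
case: m phi a rho => [|m] phi a rho hdiv hnz hrho.
  have h1 : rho 0 0 * a 0 0 = 1 by rewrite -hrho mxE big_ord1.
  exists (rho 0 0)%:M; split; last first.
    by rewrite mul_scalar_mx mxE.
  apply: GPhi_crit => //.
    by rewrite unitmxE det_scalar1; apply/unitrPr; exists (a 0 0).
  move=> i j; rewrite !ord1 mxE eqxx; exists (rho 0 0); rewrite mulr1n; ring.
case: (eqVneq (a ord_max 0) 0) => [al0|alnz]; last by apply: (core hdiv hnz hrho alnz).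
have [j hj] : exists j, a j 0 != 0.
  case: (pickP (fun j => a j 0 != 0)) => [j hj|none]; first by exists j.
  move: hrho; rewrite mxE big1 => [/esym/eqP|i _]; first by rewrite oner_eq0.
  by move: (none i) => /negbFE/eqP ->; rewrite mulr0.
set l : 'I_m.+2 := ord_max in al0.
have jl : j != l by apply: contraNneq hj => ->; rewrite al0.
have jlt : (j < l)%N by rewrite /l /= ltn_neqAle -ltnS ltn_ord andbT; move: jl; rewrite -(inj_eq val_inj).
have [c Hc] := hdiv j l (ltnW jlt).
have cnz : c != 0 by apply/eqP => c0; move: (hnz l); rewrite Hc c0 mul0r eqxx.
pose L1 := 1%:M + c *: delta_mx l j : 'M[R]_m.+2.
have L1low : lower_unitri L1.
  move=> i k; rewrite /L1 !mxE; split.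
    case: ifP => // ik.
    have -> : (i == k) = false by apply/negbTE; rewrite -(inj_eq val_inj) /= neq_ltn ik.
    case: (eqVneq i l) => [il|]; last by rewrite /= mulr0 addr0.
    by move: ik; rewrite il /= ltnNge -ltnS ltn_ord.
  move=> ->; rewrite eqxx.
  case: (eqVneq k l) => [->|]; last by rewrite /= mulr0 addr0.
  by rewrite [l == j]eq_sym (negbTE jl) andbF mulr0 addr0.
have L1G : G_Phi (diag_mx phi) L1.
  apply: GPhi_crit => //; first exact: lower_unit.
  move=> i k; rewrite /L1 !mxE.
  case: (eqVneq i l) => [->|il]; case: (eqVneq k j) => [->|kj] /=.
  - by exists 1; rewrite [l == j]eq_sym (negbTE jl) Hc ?natbE /=; ring.
  - case: (eqVneq l k) => [<-|lk]; first by exists 1; rewrite ?natbE /=; ring.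
    by exists 0; rewrite ?natbE /=; ring.
  - case: (eqVneq i j) => [->|ij]; first by exists 1; rewrite ?natbE /=; ring.
    by exists 0; rewrite ?natbE /=; ring.
  - case: (eqVneq i k) => [->|ik]; first by exists 1; rewrite ?natbE /=; ring.
    by exists 0; rewrite ?natbE /=; ring.
pose a' := L1 *m a.
have a'l : a' l 0 != 0.
  rewrite /a' /L1 mulmxDl mul1mx addE -scalemxAl scaleE deltaM_entry eqxx al0.
  by rewrite add0r mul1r mulf_neq0.
have L1u : L1 \in unitmx by exact: lower_unit.
have hrho' : ((rho *m invmx L1) *m a') 0 0 = 1.
  by rewrite /a' -mulmxA (mulmxA (invmx L1)) mulVmx // mul1mx.
have [G [GG Ga]] := core hdiv hnz hrho' a'l.
exists (G *m L1); split; first exact: GPhi_mul.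
by rewrite -mulmxA.
Qed.

End Key.


Section Main.
Variable R : idomainType.
Hypothesis hB : bezout_domain R.
Hypothesis hS : stable_range_1_5 R.

Lemma split_cases n (P : 'I_(1 + n) -> Prop) :
  (forall i : 'I_1, P (lshift n i)) -> (forall i : 'I_n, P (rshift 1 i)) -> forall i, P i.
Proof. by move=> h1 h2 i; rewrite -[i]splitK; case: (split i) => j /=; [exact: h1|exact: h2]. Qed.

Lemma bdiag_G n (phi : 'rV[R]_(1 + n)) (H' : 'M[R]_n) :
  (forall i, phi 0 i != 0) -> G_Phi (diag_mx (rsubmx phi)) H' ->
  G_Phi (diag_mx phi) (block_mx 1%:M 0 0 H').
Proof.
move=> hnz hH; apply: GPhi_crit => //.
  by rewrite unitmxE det_ublock det1 mul1r -unitmxE; case: hH.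
have hd := GPhi_div hH.
apply: split_cases => i; apply: split_cases => j.
- by rewrite block_mxEul !ord1 mxE eqxx; exists 1; rewrite mulr1n mul1r.
- by rewrite block_mxEur mxE mul0r; exists 0; rewrite mul0r.
- by rewrite block_mxEdl mxE mul0r; exists 0; rewrite mul0r.
- by rewrite block_mxEdr; have := hd i j; rewrite !mxE.
Qed.

Lemma lr_ne n (i : 'I_1) (j : 'I_n) : lshift n i <> rshift 1 j.
Proof. by move/(congr1 val); rewrite /= (ord1 i). Qed.
Lemma lr_lt n (i : 'I_1) (j : 'I_n) : (lshift n i < rshift 1 j)%N.
Proof. by rewrite /= (ord1 i). Qed.
Lemma rl_lt n (i : 'I_1) (j : 'I_n) : (rshift 1 j < lshift n i)%N = false.
Proof. by rewrite /= (ord1 i). Qed.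
Lemma ll_lt n (i i' : 'I_1) : (lshift n i < lshift n i')%N = false.
Proof. by rewrite /= (ord1 i) (ord1 i'). Qed.
Lemma rr_lt n (i j : 'I_n) : (rshift 1 i < rshift 1 j)%N = (i < j)%N.
Proof. by []. Qed.

Lemma lower_block n (c : 'cV[R]_n) (L' : 'M[R]_n) :
  lower_unitri L' -> lower_unitri (block_mx (1%:M : 'M[R]_1) 0 c L').
Proof.
move=> hL; apply: split_cases => i; apply: split_cases => j.
- by rewrite ll_lt block_mxEul (ord1 i) (ord1 j) mxE eqxx.
- by rewrite lr_lt block_mxEur mxE; split => // /lr_ne.
- by rewrite rl_lt block_mxEdl; split => // /esym /lr_ne.
- rewrite rr_lt block_mxEdr; have [h1 h2] := hL i j; split => //.
  by move/rshift_inj.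
Qed.

Lemma upper_block n (r : 'rV[R]_n) (U' : 'M[R]_n) :
  upper_unitri U' -> upper_unitri (block_mx (1%:M : 'M[R]_1) r 0 U').
Proof.
move=> hU; apply: split_cases => i; apply: split_cases => j.
- by rewrite ll_lt block_mxEul (ord1 i) (ord1 j) mxE eqxx.
- by rewrite rl_lt block_mxEur; split => // /lr_ne.
- by rewrite lr_lt block_mxEdl mxE; split => // /esym /lr_ne.
- rewrite rr_lt block_mxEdr; have [h1 h2] := hU i j; split => //.
  by move/rshift_inj.
Qed.

Lemma main n (phi : 'rV[R]_n) :
  (forall i j : 'I_n, (i <= j)%N -> dvdR (phi 0 i) (phi 0 j)) ->
  (forall i, phi 0 i != 0) ->
  forall A : 'M[R]_n, A \in unitmx -> exists H L U,
    [/\ G_Phi (diag_mx phi) H, lower_unitri L, upper_unitri U & A = H *m L *m U].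
Proof.
elim: n phi => [|n IH] phi hdiv hnz A hA.
  exists A, 1%:M, 1%:M; split; [by apply: GPhi_crit => // [[]] | by case | by case |].
  by rewrite !mulmx1.
have hrho : (row 0 (invmx A) *m col 0 A) 0 0 = 1.
  have -> : (row 0 (invmx A) *m col 0 A) 0 0 = (invmx A *m A) 0 0.
    by rewrite !mxE; apply: eq_bigr => k _; rewrite !mxE.
  by rewrite mulVmx // mxE eqxx.
have [G [GG G1]] := key hB hS hdiv hnz hrho.
have Gu := GPhi_unit GG.
pose B : 'M[R]_(1 + n) := G *m A.
have Bu : B \in unitmx by rewrite unitmx_mul Gu hA.
have B00 : ulsubmx B = 1%:M.
  apply/matrixP => i j; rewrite !ord1 !mxE /=.
  rewrite -G1 !mxE; apply: eq_bigr => k _; rewrite !mxE.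
  by have -> : lshift n (0 : 'I_1) = ord0 by apply: val_inj.
pose r := ursubmx B; pose c := dlsubmx B; pose D := drsubmx B.
pose Eb := D - c *m r.
have Bdec : B = block_mx 1%:M 0 c Eb *m block_mx 1%:M r 0 1%:M.
  rewrite mulmx_block !mul1mx !mulmx0 !mul0mx !mulmx1 !addr0 ?add0r /Eb addrC subrK.
  by rewrite -B00 submxK.
have Ebu : Eb \in unitmx.
  move: Bu; rewrite Bdec !unitmxE det_mulmx det_lblock det_ublock !det1 !mul1r mulr1.
  by [].
pose phi' := rsubmx (phi : 'rV[R]_(1 + n)).
have hdiv' : forall i j : 'I_n, (i <= j)%N -> dvdR (phi' 0 i) (phi' 0 j).
  by move=> i j ij; rewrite !mxE; apply: hdiv; rewrite /= leq_add2l.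
have hnz' : forall i, phi' 0 i != 0 by move=> i; rewrite mxE.
have [H' [L' [U' [HG' HL' HU' HE]]]] := IH phi' hdiv' hnz' Eb Ebu.
have H'u := GPhi_unit HG'.
exists (invmx G *m (block_mx (1%:M : 'M_1) 0 0 H' : 'M_(1 + n))),
  (block_mx (1%:M : 'M_1) 0 (invmx H' *m c) L' : 'M_(1 + n)),
  (block_mx (1%:M : 'M_1) r 0 U' : 'M_(1 + n)); split.
- apply: GPhi_mul; first exact: GPhi_inv.
  exact: bdiag_G.
- exact: lower_block.
- exact: upper_block.
- have eq : (block_mx (1%:M : 'M_1) 0 0 H' : 'M_(1 + n)) *m
      (block_mx (1%:M : 'M_1) 0 (invmx H' *m c) L' : 'M_(1 + n)) *m
      (block_mx (1%:M : 'M_1) r 0 U' : 'M_(1 + n)) = B.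
    rewrite !mulmx_block !mul1mx !mulmx0 !mul0mx !mulmx1 ?addr0 ?add0r mulKVmx //.
    rewrite mul1mx mul0mx addr0.
    rewrite -HE /Eb addrC subrK.
    by rewrite -[RHS]submxK B00.
  rewrite -!mulmxA; apply: (canRL (mulKmx Gu)); rewrite -/B !mulmxA.
  exact: (esym eq).
Qed.

End Main.


Section Final.
Variable R : idomainType.

Lemma dvdR_trans (a b c : R) : dvdR a b -> dvdR b c -> dvdR a c.
Proof. by case=> x -> [y ->]; exists (y * x); ring. Qed.

Lemma dmat_props n (Phi : 'M[R]_n) : is_dmatrix Phi -> \det Phi != 0 ->
  exists phi : 'rV[R]_n, [/\ Phi = diag_mx phi,
    (forall i j : 'I_n, (i <= j)%N -> dvdR (phi 0 i) (phi 0 j)) &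
    (forall i, phi 0 i != 0)].
Proof.
case=> phi [-> hadj] hdet; exists phi; split => //; last first.
  by move: hdet; rewrite det_diag => /prodf_neq0 h i; exact: h.
suff H : forall k (i j : 'I_n), j = (i + k)%N :> nat -> dvdR (phi 0 i) (phi 0 j).
  by move=> i j ij; apply: (H (j - i)%N); rewrite subnKC.
elim=> [|k IH] i j e.
  have -> : j = i by apply: val_inj; rewrite /= e addn0.
  by exists 1; rewrite mul1r.
have lt : (i + k < n)%N by have := ltn_ord j; rewrite e addnS => /ltnW.
apply: (dvdR_trans (IH i (Ordinal lt) erefl)); apply: hadj => /=.
by rewrite e addnS.
Qed.

Lemma one_to_GL (hB : bezout_domain R) (hS : stable_range_1_5 R) n (Phi : 'M[R]_n) :
  is_dmatrix Phi -> \det Phi != 0 -> GL_factor Phi.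
Proof.
move=> hd hdet; have [phi [-> hdiv hnz]] := dmat_props hd hdet.
move=> A; split.
  by move=> hA; have [H [L [U [? ? ? ?]]]] := main hB hS hdiv hnz hA; exists H, L, U.
case=> H [L [U [hH hL hU ->]]].
by rewrite !unitmx_mul (GPhi_unit hH) (lower_unit hL) (upper_unit hU).
Qed.

Lemma SR2 : (forall Phi : 'M[R]_2, is_dmatrix Phi -> \det Phi != 0 -> GL_factor Phi) ->
  forall s t x y c : R, x * s + y * t = 1 -> c != 0 -> exists u, cop (t - s * u) c.
Proof.
move=> h2 s t x y c hxy cnz.
pose phi : 'rV[R]_2 := \row_j (if val j == 0%N then 1 else c).
have hdm : is_dmatrix (diag_mx phi).
  exists phi; split => // i j e; rewrite !mxE.
  case: i e => [[|i] hi] e /=; first by eexists; rewrite mulr1.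
  by move: (ltn_ord j); rewrite e; case: i hi {e}.
have hdet : \det (diag_mx phi) != 0.
  apply: detdiag_neq0 => i; rewrite mxE; case: ifP => _ //; exact: oner_neq0.
pose A : 'M[R]_2 := \matrix_(i, j) (if val i == 0%N then (if val j == 0%N then y else - x)
                                   else (if val j == 0%N then s else t)).
pose A' : 'M[R]_2 := \matrix_(i, j) (if val i == 0%N then (if val j == 0%N then t else x)
                                   else (if val j == 0%N then - s else y)).
have hA : A \in unitmx.
  have [] // := @mulmx1_unit _ _ A A'.
  apply/matrixP => i j; rewrite !mxE !big_ord_recl big_ord0 !mxE /=.
  case: i => [[|[|i]] hi] //; case: j => [[|[|j]] hj] //= ; rewrite ?natbE /=; rewrite -hxy; ring.
have [H [L [U [hH hL hU eA]]]] := (h2 _ hdm hdet A).1 hA.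
have [k hk] := GPhi_div hH (lift ord0 ord0) ord0.
set i1 : 'I_2 := lift ord0 ord0 in hk.
have [L01 _] := hL ord0 i1.
have L00 : L ord0 ord0 = 1 by case: (hL ord0 ord0) => _ ->.
have L11 : L i1 i1 = 1 by case: (hL i1 i1) => _ ->.
have [U10 _] := hU i1 ord0.
have U00 : U ord0 ord0 = 1 by case: (hU ord0 ord0) => _ ->.
have U11 : U i1 i1 = 1 by case: (hU i1 i1) => _ ->.
rewrite /= in L01 U10.
move: hk; rewrite !mxE /= mulr1 => hk.
have es : s = H i1 ord0 + H i1 i1 * L i1 ord0.
  have := congr1 (fun M : 'M[R]_2 => M i1 ord0) eA.
  rewrite !mxE !big_ord_recl !big_ord0 !mxE /= -/i1 => ->.
  rewrite !big_ord_recl !big_ord0 -/i1.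
  rewrite ?L01 ?U10 ?L00 ?L11 ?U00 ?U11; ring.
have et : t = s * U ord0 i1 + H i1 i1.
  have := congr1 (fun M : 'M[R]_2 => M i1 i1) eA.
  rewrite !mxE !big_ord_recl !big_ord0 !mxE /= -/i1 => ->.
  rewrite !big_ord_recl !big_ord0 -/i1.
  rewrite es ?L01 ?U10 ?L00 ?L11 ?U00 ?U11; ring.
exists (U ord0 i1); rewrite et.
exists (x * L i1 ord0 + y * L i1 ord0 * U ord0 i1 + y), (x * k + y * k * U ord0 i1).
rewrite -hxy et es hk; ring.
Qed.

Lemma two_to_one (hB : bezout_domain R) :
  (forall Phi : 'M[R]_2, is_dmatrix Phi -> \det Phi != 0 -> GL_factor Phi) ->
  stable_range_1_5 R.
Proof.
move=> h2 a b c cnz /in_ideal3 [al [be [ga H1]]].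
have [d [p [q [mu [nu [Ea Eb Ed]]]]]] := gcd2 hB a b.
case: (eqVneq d 0) => [d0|dnz].
  exists 0; apply/in_ideal2; exists 0, ga.
  by rewrite H1 Ea Eb d0; ring.
have hpq : nu * q + mu * p = 1.
  apply: (mulIf dnz); have := Ed; rewrite Ea Eb => Ed'.
  by rewrite mul1r [RHS]Ed'; ring.
have [u [u1 [v1 huv]]] := SR2 h2 hpq cnz.
have cd : cop d c by exists (al * p + be * q), ga; rewrite H1 Ea Eb; ring.
have [w1 [w2 hw]] := cop_mul cd (ex_intro _ u1 (ex_intro _ v1 huv)).
exists (- u); apply/in_ideal2; exists w1, w2.
by rewrite -hw Ea Eb; ring.
Qed.

End Final.

Unset Implicit Arguments.
Set Strict Implicit.

Theorem theorem2p14 (R : idomainType) (hB : bezout_domain R) :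
  (stable_range_1_5 R <->
     (forall Phi : 'M[R]_2, is_dmatrix Phi -> \det Phi != 0 -> GL_factor Phi)) /\
  (stable_range_1_5 R <->
     (forall (n : nat) (Phi : 'M[R]_n), (2 <= n)%N ->
        is_dmatrix Phi -> \det Phi != 0 -> GL_factor Phi)).
Proof.
split; split.
- by move=> hS Phi; apply: one_to_GL.
- exact: two_to_one.
- by move=> hS n Phi _; apply: one_to_GL.
- by move=> h3; apply: two_to_one => // Phi; apply: h3.
Qed.
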